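(* Let $D:\mathbb R^2\setminus\{0\}\to\mathbb R$ be nonnegative, bounded and continuously differentiable, and consider $\ddot x+D(x)\dot x=-x/|x|^3$. Let $x_n:\,]-\infty,0]\to\mathbb R^2\setminus\{0\}$ be a sequence of nonrectilinear solutions, and set $r_n=|x_n|$. Suppose that for some $r_*>0$ we have $r_n(0)=r_*$ for all $n$ and $\dot r_n(0)\to+\infty$. Then for all $n$ large enough: (i) there exists $\mathfrak t_n<0$ with $\dot r_n(\mathfrak t_n)=0$, and moreover these can be chosen with $\lim_{n\to\infty}\mathfrak t_n=0$; (ii) $\dot r_n(t)>0$ for all $t\in\,]\mathfrak t_n,0[$ and $\dot r_n(t)<0$ for all $t<\mathfrak t_n$; (iii) there exists $\tau_n<\mathfrak t_n$ with $r_n(\tau_n)=r_*$; moreover $\lim_{n\to\infty}\tau_n=0$ and $\lim_{n\to\infty}\dot r_n(\tau_n)=-\infty$.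
   Context: A solution is nonrectilinear if its angular momentum $\det(x,\dot x)$ is not identically zero; such solutions are defined on all of $]-\infty,0]$ when maximal in the past. *)

(* Defs.v *)
From Stdlib Require Import Reals.
From Coquelicot Require Import Coquelicot.
Open Scope R_scope.

Definition nrm (a b : R) : R := sqrt (a ^ 2 + b ^ 2).

(* [ldrv f t l]: f has derivative l at t relative to the half-line ]-oo,0]
   (two-sided derivative when t < 0, left derivative when t = 0). *)
Definition ldrv (f : R -> R) (t l : R) : Prop :=
  filterlim (fun h => (f (t + h) - f t) / h)
    (within (fun h => h <> 0 /\ t + h <= 0) (locally 0)) (locally l).

Definition C1_punctured (D : R -> R -> R) : Prop :=
  exists D1 D2 : R -> R -> R, forall y1 y2 : R, (y1, y2) <> (0, 0) ->
    differentiable_pt_lim D y1 y2 (D1 y1 y2) (D2 y1 y2) /\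
    continuity_2d_pt D1 y1 y2 /\ continuity_2d_pt D2 y1 y2.

(* (x1,x2) : ]-oo,0] -> R^2\{0} solves x'' + D(x) x' = -x/|x|^3,
   with velocity (v1,v2) = x'. *)
Definition is_solution (D : R -> R -> R) (x1 x2 v1 v2 : R -> R) : Prop :=
  forall t : R, t <= 0 ->
    (x1 t, x2 t) <> (0, 0) /\
    ldrv x1 t (v1 t) /\ ldrv x2 t (v2 t) /\
    ldrv v1 t (- D (x1 t) (x2 t) * v1 t - x1 t / (nrm (x1 t) (x2 t)) ^ 3) /\
    ldrv v2 t (- D (x1 t) (x2 t) * v2 t - x2 t / (nrm (x1 t) (x2 t)) ^ 3).

(* Nonrectilinear: the angular momentum det(x, x') is not identically zero. *)
Definition nonrectilinear (x1 x2 v1 v2 : R -> R) : Prop :=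
  exists t : R, t <= 0 /\ x1 t * v2 t - x2 t * v1 t <> 0.

(* Main.v *)
Require Import Defs.
From Stdlib Require Import Reals Lra Classical ClassicalEpsilon.
From Coquelicot Require Import Coquelicot.
Open Scope R_scope.

Lemma ballR x e y : ball x e y <-> Rabs (y - x) < e.
Proof. unfold ball; simpl; unfold AbsRing_ball, abs, minus, plus, opp; simpl. tauto. Qed.

Definition eps_d (f : R -> R) (t d : R) : Prop :=
  forall eps, 0 < eps -> exists delta, 0 < delta /\ forall h, Rabs h < delta -> h <> 0 ->
    t + h <= 0 -> Rabs ((f (t+h) - f t)/h - d) < eps.

Lemma ldrv_eps f t d : ldrv f t d -> eps_d f t d.
Proof.
  intros H eps Heps.
  assert (Hl : locally d (fun y => Rabs (y - d) < eps)).
  { exists (mkposreal eps Heps). intros y Hy. apply ballR in Hy. exact Hy. }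
  specialize (H _ Hl). destruct H as [[del Hdel] Hd].
  exists del. split; [exact Hdel|]. intros h Hh Hh0 Hth.
  apply (Hd h). apply ballR. simpl. replace (h - 0) with h by ring. exact Hh. split; assumption.
Qed.

Lemma dpl_eps f t d : derivable_pt_lim f t d -> eps_d f t d.
Proof.
  intros H eps Heps. destruct (H eps Heps) as [del Hd]. exists del. split.
  apply cond_pos. intros h Hh Hh0 _. apply Hd; assumption.
Qed.

Lemma eps_d_ext f g t d : t <= 0 -> (forall s, s <= 0 -> f s = g s) -> eps_d f t d -> eps_d g t d.
Proof.
  intros Ht Hfg H eps Heps. destruct (H eps Heps) as [del [Hdel Hd]]. exists del; split; auto.
  intros h Hh Hh0 Hth. rewrite <- !Hfg by lra. apply Hd; auto.
Qed.

Lemma eps_d_unique f t d1 d2 : t <= 0 -> eps_d f t d1 -> eps_d f t d2 -> d1 = d2.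
Proof.
  intros Ht H1 H2. destruct (Req_dec d1 d2) as [e|n]; auto. exfalso.
  assert (He : 0 < Rabs (d1 - d2) / 2). { assert (0 < Rabs (d1 - d2)) by (apply Rabs_pos_lt; lra). lra. }
  destruct (H1 _ He) as [a [Ha Hda]]. destruct (H2 _ He) as [b [Hb Hdb]].
  assert (Hm : 0 < Rmin a b) by (apply Rmin_glb_lt; auto).
  set (h := - Rmin a b / 2).
  assert (Hh : Rabs h < Rmin a b). { unfold h. rewrite Rabs_left by lra. lra. }
  assert (Hma := Rmin_l a b). assert (Hmb := Rmin_r a b).
  specialize (Hda h ltac:(lra) ltac:(unfold h; lra) ltac:(unfold h; lra)).
  specialize (Hdb h ltac:(lra) ltac:(unfold h; lra) ltac:(unfold h; lra)).
  set (q := (f (t + h) - f t) / h) in *.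
  assert (Rabs (d1 - d2) <= Rabs (q - d1) + Rabs (q - d2)).
  { replace (d1 - d2) with (-(q - d1) + (q - d2)) by ring.
    eapply Rle_trans; [apply Rabs_triang|]. rewrite Rabs_Ropp. lra. }
  lra.
Qed.

Definition ext (f : R -> R) (l : R) (s : R) : R :=
  if Rle_dec s 0 then f s else f 0 + l * s.

Lemma ext_eq f l s : s <= 0 -> ext f l s = f s.
Proof. intros; unfold ext; destruct (Rle_dec s 0); [auto|lra]. Qed.

Lemma ext_dpl f l t d : t <= 0 -> ldrv f t d -> (t = 0 -> d = l) -> derivable_pt_lim (ext f l) t d.
Proof.
  intros Ht H Hl eps Heps. destruct (ldrv_eps _ _ _ H eps Heps) as [del [Hdel Hd]].
  destruct (Req_dec t 0) as [Ht0|Ht0].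
  - subst t. specialize (Hl eq_refl). subst d.
    exists (mkposreal del Hdel). intros h Hh0 Hh. simpl in Hh.
    rewrite (ext_eq f l 0) by lra. rewrite Rplus_0_l.
    unfold ext at 1. destruct (Rle_dec h 0).
    + specialize (Hd h Hh Hh0 ltac:(lra)). rewrite Rplus_0_l in Hd. exact Hd.
    + replace ((f 0 + l * h - f 0) / h - l) with 0 by (field; auto). rewrite Rabs_R0; lra.
  - assert (Hp : 0 < Rmin del (-t)) by (apply Rmin_glb_lt; lra).
    exists (mkposreal _ Hp). intros h Hh0 Hh. simpl in Hh.
    assert (Hma := Rmin_l del (-t)). assert (Hmb := Rmin_r del (-t)).
    assert (h < -t) by (apply Rabs_def2 in Hh; lra).
    rewrite !ext_eq by lra. apply Hd; auto; lra.
Qed.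

Lemma deriv_cont F t d : is_derive F t d -> continuity_pt F t.
Proof.
  intros H. apply continuity_pt_filterlim. apply (ex_derive_continuous (K:=R_AbsRing) (V:=R_NormedModule)). exists d; exact H.
Qed.

Lemma mvt F dF a b : a < b -> (forall t, a <= t <= b -> is_derive F t (dF t)) ->
  exists c, a <= c <= b /\ F b - F a = dF c * (b - a).
Proof.
  intros Hab H. destruct (MVT_gen F a b dF) as [c [Hc E]].
  - intros x Hx. rewrite Rmin_left, Rmax_right in Hx by lra. apply H; lra.
  - intros x Hx. rewrite Rmin_left, Rmax_right in Hx by lra. eapply deriv_cont, H; lra.
  - rewrite Rmin_left, Rmax_right in Hc by lra. exists c; auto.
Qed.

Lemma mono F dF a b : a <= b -> (forall t, a <= t <= b -> is_derive F t (dF t)) ->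
  (forall t, a <= t <= b -> 0 <= dF t) -> F a <= F b.
Proof.
  intros Hab H Hp. destruct (Req_dec a b) as [->|Hne]; [lra|].
  destruct (mvt F dF a b ltac:(lra) H) as [c [Hc E]].
  assert (0 <= dF c * (b - a)) by (apply Rmult_le_pos; [apply Hp; lra| lra]). lra.
Qed.

Lemma smono F dF a b : a < b -> (forall t, a <= t <= b -> is_derive F t (dF t)) ->
  (forall t, a <= t <= b -> 0 < dF t) -> F a < F b.
Proof.
  intros Hab H Hp.
  destruct (mvt F dF a b ltac:(lra) H) as [c [Hc E]].
  assert (0 < dF c * (b - a)) by (apply Rmult_lt_0_compat; [apply Hp; lra| lra]). lra.
Qed.

Lemma deriv_pos_right F c d : is_derive F c d -> 0 < d ->
  exists del, 0 < del /\ forall h, 0 < h < del -> F c < F (c + h) /\ F (c - h) < F c.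
Proof.
  intros H Hd. apply is_derive_Reals in H. destruct (H d Hd) as [del Hdel].
  exists del. split; [apply cond_pos|]. intros h Hh. split.
  - specialize (Hdel h ltac:(lra) ltac:(rewrite Rabs_right; lra)).
    apply Rabs_def2 in Hdel. destruct Hdel as [_ Hq].
    assert (0 < (F (c + h) - F c) / h) by lra.
    assert (0 < (F (c + h) - F c)). { replace (F (c + h) - F c) with ((F (c + h) - F c) / h * h) by (field; lra).
      apply Rmult_lt_0_compat; lra. } lra.
  - specialize (Hdel (-h) ltac:(lra) ltac:(rewrite Rabs_left; lra)).
    apply Rabs_def2 in Hdel. destruct Hdel as [_ Hq].
    assert (0 < (F (c + - h) - F c) / - h) by lra.
    assert (0 < (F c - F (c + - h))). { replace (F c - F (c + - h)) with ((F (c + - h) - F c) / - h * h) by (field; lra).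
      apply Rmult_lt_0_compat; lra. }
    replace (c - h) with (c + - h) by ring. lra.
Qed.

Lemma last_zero F a b : a <= b -> (forall t, a <= t <= b -> continuity_pt F t) ->
  F a <= 0 -> 0 < F b -> exists c, a <= c < b /\ F c = 0 /\ forall t, c < t <= b -> 0 < F t.
Proof.
  intros Hab Hc Ha Hb.
  set (E := fun t => a <= t <= b /\ F t <= 0).
  assert (Hbd : bound E). { exists b. intros t [Ht _]. lra. }
  assert (Hne : exists t, E t). { exists a. split; [lra|auto]. }
  destruct (completeness E Hbd Hne) as [m [Hub Hlub]].
  assert (Ham : a <= m). { apply Hub. split; [lra|auto]. }
  assert (Hmb : m <= b). { apply Hlub. intros t [Ht _]. lra. }
  assert (Hup : forall t, m < t <= b -> 0 < F t).
  { intros t Ht. destruct (Rlt_le_dec 0 (F t)) as [p|p]; auto.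
    assert (t <= m) by (apply Hub; split; [lra|auto]). lra. }
  assert (HFm : F m <= 0).
  { destruct (Rle_dec (F m) 0) as [p|p]; auto. exfalso.
    assert (Hp : 0 < F m) by lra.
    destruct (Hc m ltac:(lra) (F m) Hp) as [del [Hdel Hd]].
    assert (Ha' : a < m). { destruct (Req_dec a m) as [e|e]; [subst; lra| lra]. }
    assert (Hub2 : is_upper_bound E (Rmax a (m - del / 2))).
    { intros t [Ht HFt]. destruct (Rle_dec t (Rmax a (m - del / 2))) as [q|q]; auto.
      exfalso. assert (t <= m) by (apply Hub; split; auto).
      assert (Hmx := Rmax_r a (m - del/2)).
      destruct (Req_dec t m) as [->|Htm]; [lra|].
      specialize (Hd t). simpl in Hd. unfold R_dist in Hd.
      assert (Rabs (F t - F m) < F m).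
      { apply Hd. split. unfold D_x, no_cond. split; auto. rewrite Rabs_left by lra. lra. }
      apply Rabs_def2 in H0. lra. }
    specialize (Hlub _ Hub2). assert (Rmax a (m - del / 2) < m) by (apply Rmax_lub_lt; lra). lra. }
  assert (Hmb' : m < b). { destruct (Req_dec m b) as [->|e]; lra. }
  assert (HFm0 : F m = 0).
  { destruct (Req_dec (F m) 0) as [e|e]; auto. exfalso.
    assert (Hp : 0 < - F m) by lra.
    destruct (Hc m ltac:(lra) (- F m) Hp) as [del [Hdel Hd]].
    set (t := Rmin b (m + del / 2)).
    assert (Ht1 : m < t). { unfold t. apply Rmin_glb_lt; lra. }
    assert (Ht2 : t <= b) by apply Rmin_l.
    assert (Ht3 : t <= m + del/2) by apply Rmin_r.
    specialize (Hup t ltac:(lra)).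
    specialize (Hd t). simpl in Hd. unfold R_dist in Hd.
    assert (Rabs (F t - F m) < - F m).
    { apply Hd. split. unfold D_x, no_cond. split; auto; lra. rewrite Rabs_right by lra. lra. }
    apply Rabs_def2 in H. lra. }
  exists m. repeat split; auto.
Qed.

Lemma cross_strict F dF a b : a <= b -> (forall t, a<=t<=b -> is_derive F t (dF t)) ->
  (forall t, a<=t<=b -> F t = 0 -> 0 < dF t) -> F b < 0 -> forall t, a <= t <= b -> F t < 0.
Proof.
  intros Hab HD Hz Hb t Ht. destruct (Rlt_le_dec (F t) 0) as [p|p]; auto. exfalso.
  destruct (last_zero (fun s => - F s) t b) as [c [Hc [Hc0 Hcp]]]; try lra.
  - intros s Hs. apply continuity_pt_opp. eapply deriv_cont, HD; lra.
  - destruct (deriv_pos_right F c (dF c)) as [del [Hdel Hd]].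
    apply HD; lra. apply Hz; lra.
    set (h := Rmin del (b - c) / 2).
    assert (0 < Rmin del (b - c)) by (apply Rmin_glb_lt; lra).
    assert (Rmin del (b - c) <= del) by apply Rmin_l.
    assert (Rmin del (b - c) <= b - c) by apply Rmin_r.
    destruct (Hd h ltac:(unfold h; lra)) as [Hq _].
    specialize (Hcp (c + h) ltac:(unfold h; lra)). simpl in Hcp. lra.
Qed.

Lemma cross F dF a b : a <= b -> (forall t, a<=t<=b -> is_derive F t (dF t)) ->
  (forall t, a<=t<=b -> F t = 0 -> 0 < dF t) -> F b <= 0 -> forall t, a <= t < b -> F t < 0.
Proof.
  intros Hab HD Hz Hb t Ht. destruct (Rlt_le_dec (F b) 0) as [p|p].
  - apply (cross_strict F dF a b); auto; lra.
  - assert (Hb0 : F b = 0) by lra.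
    destruct (deriv_pos_right F b (dF b)) as [del [Hdel Hd]].
    apply HD; lra. apply Hz; auto; lra.
    set (h := Rmin del (b - t) / 2).
    assert (0 < Rmin del (b - t)) by (apply Rmin_glb_lt; lra).
    assert (Rmin del (b - t) <= del) by apply Rmin_l.
    assert (Rmin del (b - t) <= b - t) by apply Rmin_r.
    destruct (Hd h ltac:(unfold h; lra)) as [_ Hq].
    apply (cross_strict F dF a (b - h)); try (unfold h; lra).
    + intros s Hs; apply HD; unfold h in *; lra.
    + intros s Hs; apply Hz; unfold h in *; lra.
    + unfold h in *; lra.
Qed.

Lemma drep (f : R -> R) (x a b : R) : is_derive f x a -> a = b -> is_derive f x b.
Proof. intros H ->; exact H. Qed.
Lemma dplus (f g : R -> R) x a b : is_derive f x a -> is_derive g x b -> is_derive (fun t => f t + g t) x (a + b).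
Proof. intros. apply (is_derive_plus f g x a b); auto. Qed.
Lemma dminus (f g : R -> R) x a b : is_derive f x a -> is_derive g x b -> is_derive (fun t => f t - g t) x (a - b).
Proof. intros. apply (is_derive_minus f g x a b); auto. Qed.
Lemma dmult (f g : R -> R) x a b : is_derive f x a -> is_derive g x b -> is_derive (fun t => f t * g t) x (a * g x + f x * b).
Proof. intros. apply (is_derive_mult f g x a b); auto. intros; apply Rmult_comm. Qed.
Lemma dsq (f : R -> R) x a : is_derive f x a -> is_derive (fun t => f t ^ 2) x (2 * a * f x).
Proof. intros H. eapply drep. apply (is_derive_pow f 2 x a H). simpl. ring. Qed.
Lemma dconst (c x : R) : is_derive (fun _ => c) x 0.
Proof. apply (is_derive_const c x). Qed.
Lemma did (x : R) : is_derive (fun t => t) x 1.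
Proof. apply (is_derive_id x). Qed.
Lemma dsqrt (f : R -> R) x a : is_derive f x a -> 0 < f x -> is_derive (fun t => sqrt (f t)) x (a / (2 * sqrt (f x))).
Proof. intros; apply is_derive_sqrt; auto. Qed.
Lemma dinv (f : R -> R) x a : is_derive f x a -> f x <> 0 -> is_derive (fun t => / f t) x (- a / f x ^ 2).
Proof. intros; apply is_derive_inv; auto. Qed.
Lemma dexpk (k x : R) : is_derive (fun t => exp (k * t)) x (k * exp (k * x)).
Proof.
  eapply drep. apply (is_derive_comp exp (fun t => k * t) x (exp (k * x)) k).
  apply is_derive_exp. eapply drep. apply is_derive_scal. apply did. ring.
  reflexivity.
Qed.

Definition qf (X1 X2 : R -> R) t := X1 t ^ 2 + X2 t ^ 2.
Definition gf (X1 X2 V1 V2 : R -> R) t := X1 t * V1 t + X2 t * V2 t.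
Definition wf (V1 V2 : R -> R) t := V1 t ^ 2 + V2 t ^ 2.
Definition cf (X1 X2 V1 V2 : R -> R) t := X1 t * V2 t - X2 t * V1 t.
Definition Ef (X1 X2 V1 V2 : R -> R) t := wf V1 V2 t / 2 - 1 / sqrt (qf X1 X2 t).

Definition TH (X1 X2 V1 V2 Dt : R -> R) (M : R) : Prop :=
  forall t, t <= 0 -> 0 < X1 t ^ 2 + X2 t ^ 2 /\ is_derive X1 t (V1 t) /\ is_derive X2 t (V2 t) /\
   is_derive V1 t (- Dt t * V1 t - X1 t / (sqrt (X1 t ^ 2 + X2 t ^ 2)) ^ 3) /\
   is_derive V2 t (- Dt t * V2 t - X2 t / (sqrt (X1 t ^ 2 + X2 t ^ 2)) ^ 3) /\
   0 <= Dt t <= M.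

Lemma lagrange X1 X2 V1 V2 t : cf X1 X2 V1 V2 t ^ 2 + gf X1 X2 V1 V2 t ^ 2 = qf X1 X2 t * wf V1 V2 t.
Proof. unfold cf, gf, qf, wf. ring. Qed.

Lemma sqrt_cube a : 0 < a -> sqrt a ^ 3 = a * sqrt a.
Proof. intros H. simpl. rewrite Rmult_1_r, <- Rmult_assoc, sqrt_sqrt by lra. reflexivity. Qed.


Lemma d_q X1 X2 V1 V2 Dt M t : TH X1 X2 V1 V2 Dt M -> t <= 0 ->
  is_derive (qf X1 X2) t (2 * gf X1 X2 V1 V2 t).
Proof.
  intros H Ht. destruct (H t Ht) as (Hp & H1 & H2 & _).
  eapply drep. apply dplus; apply dsq; eauto. unfold gf; ring.
Qed.

Lemma d_r X1 X2 V1 V2 Dt M t : TH X1 X2 V1 V2 Dt M -> t <= 0 ->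
  is_derive (fun s => sqrt (qf X1 X2 s)) t (gf X1 X2 V1 V2 t / sqrt (qf X1 X2 t)).
Proof.
  intros H Ht. destruct (H t Ht) as (Hp & _).
  eapply drep. apply dsqrt. eapply d_q; eauto. exact Hp.
  assert (0 < sqrt (qf X1 X2 t)) by (apply sqrt_lt_R0; exact Hp). field; lra.
Qed.

Lemma d_g X1 X2 V1 V2 Dt M t : TH X1 X2 V1 V2 Dt M -> t <= 0 ->
  is_derive (gf X1 X2 V1 V2) t (wf V1 V2 t - Dt t * gf X1 X2 V1 V2 t - 1 / sqrt (qf X1 X2 t)).
Proof.
  intros H Ht. destruct (H t Ht) as (Hp & H1 & H2 & H3 & H4 & _).
  eapply drep. apply dplus; apply dmult; eauto.
  unfold wf, gf, qf in *. rewrite sqrt_cube by lra.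
  assert (0 < sqrt (X1 t ^ 2 + X2 t ^ 2)) by (apply sqrt_lt_R0; exact Hp).
  field. lra.
Qed.

Lemma d_E X1 X2 V1 V2 Dt M t : TH X1 X2 V1 V2 Dt M -> t <= 0 ->
  is_derive (Ef X1 X2 V1 V2) t (- Dt t * wf V1 V2 t).
Proof.
  intros H Ht. destruct (H t Ht) as (Hp & H1 & H2 & H3 & H4 & _).
  assert (Hs : 0 < sqrt (qf X1 X2 t)) by (apply sqrt_lt_R0; exact Hp).
  eapply drep. apply dminus.
  - apply (is_derive_ext (fun s => / 2 * (V1 s ^ 2 + V2 s ^ 2))).
    { intros s; unfold wf, Rdiv; apply Rmult_comm. }
    apply is_derive_scal. apply dplus; apply dsq; eauto.
  - apply (is_derive_ext (fun s => / sqrt (qf X1 X2 s))).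
    { intros s; unfold Rdiv; rewrite Rmult_1_l; reflexivity. }
    apply dinv. eapply d_r; eauto. lra.
  - unfold wf, gf, qf in *. rewrite sqrt_cube by lra. rewrite pow2_sqrt by lra. field. split; lra.
Qed.

Lemma d_c2 X1 X2 V1 V2 Dt M t : TH X1 X2 V1 V2 Dt M -> t <= 0 ->
  is_derive (fun s => cf X1 X2 V1 V2 s ^ 2) t (- 2 * Dt t * cf X1 X2 V1 V2 t ^ 2).
Proof.
  intros H Ht. destruct (H t Ht) as (Hp & H1 & H2 & H3 & H4 & _).
  eapply drep. apply dsq. apply dminus; apply dmult; eauto.
  unfold cf, Rdiv. ring.
Qed.


Lemma dopp (f : R -> R) x a : is_derive f x a -> is_derive (fun t => - f t) x (- a).
Proof. intros H. apply (is_derive_opp f x a H). Qed.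

Lemma exp_mono x y : x <= y -> exp x <= exp y.
Proof. intros H; destruct (Rle_lt_or_eq_dec x y H) as [h|h]; [left; apply exp_increasing; auto| subst; lra]. Qed.

Lemma TH_D X1 X2 V1 V2 Dt M t : TH X1 X2 V1 V2 Dt M -> t <= 0 -> 0 <= Dt t <= M.
Proof. intros H Ht; apply (H t Ht). Qed.
Lemma TH_q X1 X2 V1 V2 Dt M t : TH X1 X2 V1 V2 Dt M -> t <= 0 -> 0 < qf X1 X2 t.
Proof. intros H Ht; apply (H t Ht). Qed.

Lemma energy X1 X2 V1 V2 Dt M t : TH X1 X2 V1 V2 Dt M -> t <= 0 ->
  Ef X1 X2 V1 V2 0 <= Ef X1 X2 V1 V2 t.
Proof.
  intros H Ht.
  assert (- Ef X1 X2 V1 V2 t <= - Ef X1 X2 V1 V2 0); [|lra].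
  apply (mono (fun s => - Ef X1 X2 V1 V2 s) (fun s => Dt s * wf V1 V2 s)); auto.
  - intros s Hs. eapply drep. apply dopp. eapply d_E; eauto; lra. ring.
  - intros s Hs. apply Rmult_le_pos. apply (TH_D _ _ _ _ _ _ s H); lra.
    unfold wf. nra.
Qed.

Lemma gdbound X1 X2 V1 V2 Dt M t : TH X1 X2 V1 V2 Dt M -> t <= 0 ->
  2 * Ef X1 X2 V1 V2 0 - Dt t * gf X1 X2 V1 V2 t <=
  wf V1 V2 t - Dt t * gf X1 X2 V1 V2 t - 1 / sqrt (qf X1 X2 t).
Proof.
  intros H Ht. assert (HE := energy _ _ _ _ _ _ t H Ht).
  assert (Hq := TH_q _ _ _ _ _ _ t H Ht).
  assert (0 < sqrt (qf X1 X2 t)) by (apply sqrt_lt_R0; exact Hq).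
  assert (0 < 1 / sqrt (qf X1 X2 t)) by (apply Rdiv_lt_0_compat; lra).
  unfold Ef in *. lra.
Qed.

Lemma Hbound X1 X2 V1 V2 Dt M a : TH X1 X2 V1 V2 Dt M -> 0 <= M -> 0 <= Ef X1 X2 V1 V2 0 ->
  -1 <= a <= 0 -> (forall s, a <= s <= 0 -> 0 <= gf X1 X2 V1 V2 s) ->
  gf X1 X2 V1 V2 a * exp (M * a) - 2 * Ef X1 X2 V1 V2 0 * exp (- M) * a <= gf X1 X2 V1 V2 0.
Proof.
  intros H HM HE Ha Hg.
  set (E0 := Ef X1 X2 V1 V2 0) in *.
  set (g := gf X1 X2 V1 V2) in *.
  assert (Hr : g 0 = g 0 * exp (M * 0) - 2 * E0 * exp (- M) * 0).
  { rewrite Rmult_0_r, exp_0. ring. }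
  rewrite Hr.
  apply (mono (fun s => g s * exp (M * s) - 2 * E0 * exp (- M) * s)
     (fun s => (wf V1 V2 s - Dt s * g s - 1 / sqrt (qf X1 X2 s)) * exp (M * s) + g s * (M * exp (M * s))
               - 2 * E0 * exp (- M) * 1)); [lra| |].
  - intros s Hs. apply dminus. apply (dmult g (fun u => exp (M * u))). eapply d_g; eauto; lra. apply dexpk.
    apply is_derive_scal. apply did.
  - intros s Hs. assert (Hb := gdbound _ _ _ _ _ _ s H ltac:(lra)).
    fold E0 g in Hb. assert (HD := TH_D _ _ _ _ _ _ s H ltac:(lra)).
    assert (Hgs := Hg s Hs). fold g in Hgs.
    assert (He : exp (- M) <= exp (M * s)) by (apply exp_mono; nra).
    assert (Hep : 0 < exp (M * s)) by apply exp_pos.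
    assert (2 * E0 <= wf V1 V2 s - Dt s * g s - 1 / sqrt (qf X1 X2 s) + M * g s).
    { assert (0 <= (M - Dt s) * g s) by (apply Rmult_le_pos; lra). lra. }
    assert (2 * E0 * exp (- M) <= 2 * E0 * exp (M * s)) by nra.
    nra.
Qed.

Lemma traj X1 X2 V1 V2 Dt M : TH X1 X2 V1 V2 Dt M -> 0 <= M ->
  0 < gf X1 X2 V1 V2 0 -> 1 / sqrt (qf X1 X2 0) <= Ef X1 X2 V1 V2 0 ->
  3 * gf X1 X2 V1 V2 0 * exp M <= 2 * Ef X1 X2 V1 V2 0 ->
  exists tf tau,
    - (gf X1 X2 V1 V2 0 * exp M / (2 * Ef X1 X2 V1 V2 0)) <= tf < 0 /\
    gf X1 X2 V1 V2 tf = 0 /\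
    (forall t, tf < t <= 0 -> 0 < gf X1 X2 V1 V2 t) /\
    (forall t, t < tf -> gf X1 X2 V1 V2 t < 0) /\
    - 3 * (gf X1 X2 V1 V2 0 * exp M / (2 * Ef X1 X2 V1 V2 0)) <= tau < tf /\
    qf X1 X2 tau = qf X1 X2 0 /\
    gf X1 X2 V1 V2 0 ^ 2 - 12 * M * qf X1 X2 0 * exp (3 * M) * gf X1 X2 V1 V2 0 <= gf X1 X2 V1 V2 tau ^ 2.
Proof.
  intros H HM Hg0 HE0 H3.
  set (q := qf X1 X2) in *. set (g := gf X1 X2 V1 V2) in *. set (E0 := Ef X1 X2 V1 V2 0) in *.
  set (T := g 0 * exp M / (2 * E0)).
  assert (Hq0 : 0 < q 0) by (apply (TH_q _ _ _ _ _ _ 0 H); lra).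
  assert (Hr0 : 0 < sqrt (q 0)) by (apply sqrt_lt_R0; auto).
  assert (HE0p : 0 < E0). { assert (0 < 1 / sqrt (q 0)) by (apply Rdiv_lt_0_compat; lra). lra. }
  assert (HeM : 0 < exp M) by apply exp_pos.
  assert (Hkey : 2 * E0 * T = g 0 * exp M) by (unfold T; field; lra).
  assert (HTp : 0 < T) by (unfold T; apply Rdiv_lt_0_compat; nra).
  assert (HT3 : 3 * T <= 1) by nra.
  set (Dg := fun s => wf V1 V2 s - Dt s * g s - 1 / sqrt (q s)).
  assert (HDg : forall s, s <= 0 -> is_derive g s (Dg s)) by (intros; eapply d_g; eauto).
  assert (HDq : forall s, s <= 0 -> is_derive q s (2 * g s)) by (intros; eapply d_q; eauto).
  assert (HDgb : forall s, s <= 0 -> 2 * E0 - Dt s * g s <= Dg s) by (intros; eapply gdbound; eauto).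
  assert (Hs1 : exists s, -T <= s <= 0 /\ g s <= 0).
  { apply NNPP. intros Hn.
    assert (Hall : forall s, -T <= s <= 0 -> 0 <= g s).
    { intros s Hs. apply Rnot_lt_le. intros Hlt. apply Hn. exists s. split; auto; lra. }
    assert (Hgt : 0 < g (-T)).
    { destruct (Rlt_le_dec 0 (g (-T))) as [p|p]; auto. exfalso. apply Hn. exists (-T). split; [lra|auto]. }
    assert (Hb := Hbound X1 X2 V1 V2 Dt M (-T) H HM ltac:(fold E0; lra) ltac:(lra) Hall).
    fold g E0 in Hb.
    assert (Hee : exp M * exp (- M) = 1) by (rewrite <- exp_plus; replace (M + - M) with 0 by ring; apply exp_0).
    assert (0 < g (- T) * exp (M * - T)) by (apply Rmult_lt_0_compat; auto; apply exp_pos).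
    assert (2 * E0 * exp (- M) * - T = - g 0) by (replace (2 * E0 * exp (- M) * - T) with (- (2 * E0 * T) * exp (-M)) by ring; rewrite Hkey; nra).
    lra. }
  destruct Hs1 as [s [Hs Hgs]].
  destruct (last_zero g s 0) as [tf [Htf [Hgtf Hpos]]]; try lra.
  { intros u Hu. eapply deriv_cont, HDg; lra. }
  assert (Hneg : forall t, t < tf -> g t < 0).
  { intros t Ht. apply (cross g Dg t tf); try lra.
    - intros u Hu. apply HDg; lra.
    - intros u Hu Hgu. specialize (HDgb u ltac:(lra)). rewrite Hgu in HDgb. lra. }
  assert (Hgup : forall u, tf <= u <= 0 -> g u <= g 0 * exp M).
  { intros u Hu.
    assert (Hall : forall v, u <= v <= 0 -> 0 <= g v).
    { intros v Hv. destruct (Req_dec v tf) as [->|Hne]; [lra|]. left; apply Hpos; lra. }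
    assert (Hb := Hbound X1 X2 V1 V2 Dt M u H HM ltac:(fold E0; lra) ltac:(lra) Hall).
    fold g E0 in Hb.
    assert (0 <= - (2 * E0 * exp (- M) * u)).
    { assert (0 < exp (-M)) by apply exp_pos.
      assert (0 <= 2 * E0 * exp (- M)) by nra. nra. }
    assert (Hgu : g u * exp (M * u) <= g 0) by lra.
    assert (Hinv : exp (M * u) * exp (- (M * u)) = 1) by (rewrite <- exp_plus; replace (M * u + - (M * u)) with 0 by ring; apply exp_0).
    assert (Hle : exp (- (M * u)) <= exp M) by (apply exp_mono; nra).
    assert (0 < exp (- (M * u))) by apply exp_pos.
    replace (g u) with (g u * exp (M * u) * exp (- (M * u))) by (rewrite Rmult_assoc, Hinv; ring).
    assert (g u * exp (M * u) * exp (- (M * u)) <= g 0 * exp (- (M * u))) by (apply Rmult_le_compat_r; lra).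
    nra. }
  assert (Hqtf : q 0 - 2 * g 0 * exp M * T <= q tf).
  { assert (- (q tf - 2 * g 0 * exp M * tf) <= - (q 0 - 2 * g 0 * exp M * 0)).
    { apply (mono (fun u => - (q u - 2 * g 0 * exp M * u)) (fun u => - (2 * g u - 2 * g 0 * exp M * 1))); try lra.
      - intros u Hu. apply dopp. apply dminus. apply HDq; lra. apply is_derive_scal, did.
      - intros u Hu. specialize (Hgup u Hu). lra. }
    assert (2 * g 0 * exp M * tf >= - (2 * g 0 * exp M * T)).
    { assert (0 < 2 * g 0 * exp M) by nra. nra. }
    lra. }
  assert (Hqlt : q tf < q 0).
  { assert (q tf <= q (tf / 2)).
    { apply (mono q (fun u => 2 * g u)); try lra.
      intros u Hu; apply HDq; lra.
      intros u Hu. destruct (Req_dec u tf) as [->|Hne]; [lra|]. assert (0 < g u) by (apply Hpos; lra). lra. }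
    assert (q (tf / 2) < q 0).
    { apply (smono q (fun u => 2 * g u)); try lra.
      intros u Hu; apply HDq; lra.
      intros u Hu. assert (0 < g u) by (apply Hpos; lra). lra. }
    lra. }
  assert (Hgneg : forall u, u <= tf -> g u <= 2 * E0 * (u - tf)).
  { intros u Hu.
    assert (g u - 2 * E0 * u <= g tf - 2 * E0 * tf).
    { apply (mono (fun v => g v - 2 * E0 * v) (fun v => Dg v - 2 * E0 * 1)); auto.
      - intros v Hv. apply dminus. apply HDg; lra. apply is_derive_scal, did.
      - intros v Hv. assert (g v <= 0). { destruct (Req_dec v tf) as [->|]; [lra|]. left; apply Hneg; lra. }
        specialize (HDgb v ltac:(lra)). assert (HD := TH_D _ _ _ _ _ _ v H ltac:(lra)).
        assert (0 <= - (Dt v * g v)) by nra. lra. }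
    lra. }
  assert (Hqgrow : forall t, t <= tf -> q tf + 2 * E0 * (t - tf) ^ 2 <= q t).
  { intros t Ht.
    assert (- (q t - 2 * E0 * (t - tf) ^ 2) <= - (q tf - 2 * E0 * (tf - tf) ^ 2)).
    { apply (mono (fun v => - (q v - 2 * E0 * (v - tf) ^ 2)) (fun v => - (2 * g v - 2 * E0 * (2 * 1 * (v - tf))))); auto.
      - intros v Hv. apply dopp. apply dminus. apply HDq; lra. apply is_derive_scal. apply (dsq (fun u => u - tf)).
        eapply drep. apply dminus. apply did. apply dconst. ring.
      - intros v Hv. specialize (Hgneg v ltac:(lra)). lra. }
    replace (tf - tf) with 0 in H0 by ring. lra. }
  assert (Hqa : q 0 <= q (tf - 2 * T)).
  { specialize (Hqgrow (tf - 2 * T) ltac:(lra)).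
    replace ((tf - 2 * T - tf) ^ 2) with (4 * T * T) in Hqgrow by ring.
    assert (2 * E0 * (4 * T * T) = 4 * T * (g 0 * exp M)) by (rewrite <- Hkey; ring). lra. }
  destruct (last_zero (fun u => q 0 - q u) (tf - 2 * T) tf) as [tau [Htau [Hqtau _]]]; try lra.
  { intros u Hu. apply continuity_pt_minus. apply continuity_pt_const; intros a b; reflexivity.
    eapply deriv_cont, HDq; lra. }
  exists tf, tau. fold T. split; [lra|]. split; [auto|]. split.
  { intros t Ht; apply Hpos; lra. }
  split; [auto|]. split; [lra|]. split; [lra|].
  assert (Hqt : q tau = q 0) by lra.
  set (w := wf V1 V2) in *. set (c := cf X1 X2 V1 V2).
  assert (Hw : w 0 <= w tau).
  { assert (HE := energy X1 X2 V1 V2 Dt M tau H ltac:(lra)). fold E0 in HE.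
    unfold E0, Ef in HE. fold q w in HE. rewrite Hqt in HE. lra. }
  assert (Hc : c tau ^ 2 * exp (2 * M * tau) <= c 0 ^ 2).
  { replace (c 0 ^ 2) with (c 0 ^ 2 * exp (2 * M * 0)) by (rewrite Rmult_0_r, exp_0; ring).
    apply (mono (fun u => c u ^ 2 * exp (2 * M * u))
      (fun u => (- 2 * Dt u * c u ^ 2) * exp (2 * M * u) + c u ^ 2 * (2 * M * exp (2 * M * u)))); try lra.
    - intros u Hu. apply (dmult (fun v => c v ^ 2) (fun v => exp (2 * M * v))).
      eapply d_c2; eauto; lra. apply dexpk.
    - intros u Hu. assert (HD := TH_D _ _ _ _ _ _ u H ltac:(lra)).
      assert (0 < exp (2 * M * u)) by apply exp_pos.
      assert (0 <= c u ^ 2) by (simpl; nra).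
      assert (0 <= (M - Dt u) * c u ^ 2) by (apply Rmult_le_pos; lra).
      nra. }
  assert (Hl0 := lagrange X1 X2 V1 V2 0). assert (Hlt := lagrange X1 X2 V1 V2 tau).
  fold c g q w in Hl0, Hlt.
  set (x := - (2 * M * tau)).
  set (y := exp x).
  assert (Hyinv : y * exp (2 * M * tau) = 1).
  { unfold y, x. rewrite <- exp_plus. replace (- (2 * M * tau) + 2 * M * tau) with 0 by ring. apply exp_0. }
  assert (Hepos : 0 < exp (2 * M * tau)) by apply exp_pos.
  assert (Hct : c tau ^ 2 <= c 0 ^ 2 * y).
  { replace (c tau ^ 2) with (c tau ^ 2 * exp (2 * M * tau) * y) by (rewrite Rmult_assoc, (Rmult_comm _ y), Hyinv; ring).
    assert (0 <= y) by (unfold y; left; apply exp_pos). nra. }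
  assert (Hx0 : 0 <= x) by (unfold x; nra).
  assert (Hx1 : x <= 6 * M * T) by (unfold x; nra).
  assert (Hy1 : 1 <= y) by (unfold y; rewrite <- exp_0; apply exp_mono; lra).
  assert (Hy2 : y <= exp (2 * M)) by (unfold y; apply exp_mono; nra).
  assert (Hyx : y - 1 <= x * y).
  { assert (Hi := exp_ineq1_le (- x)). replace (exp (- x)) with (exp (2 * M * tau)) in Hi by (unfold x; f_equal; ring).
    assert (0 <= y) by lra. nra. }
  assert (Hw0 : w 0 <= 4 * E0).
  { unfold E0, Ef in HE0 |- *. fold w q in HE0 |- *. lra. }
  assert (Hc0 : 0 <= c 0 ^ 2) by (simpl; nra).
  assert (Hg0s : 0 <= g 0 ^ 2) by (simpl; nra).
  assert (Hw0p : 0 <= w 0) by (unfold w, wf; nra).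
  assert (Hgt : g 0 ^ 2 - q 0 * w 0 * (y - 1) <= g tau ^ 2).
  { assert (q 0 * w 0 <= q 0 * w tau) by (apply Rmult_le_compat_l; lra).
    assert (c 0 ^ 2 * (y - 1) <= q 0 * w 0 * (y - 1)) by (apply Rmult_le_compat_r; lra).
    rewrite Hqt in Hlt. nra. }
  assert (Hb1 : q 0 * w 0 * (y - 1) <= q 0 * (4 * E0) * (6 * M * T * exp (2 * M))).
  { assert (Hxy : x * y <= 6 * M * T * exp (2 * M)).
    { assert (0 <= 6 * M * T) by nra. apply Rmult_le_compat; lra. }
    assert (0 <= q 0 * w 0) by nra.
    assert (q 0 * w 0 * (y - 1) <= q 0 * w 0 * (x * y)) by (apply Rmult_le_compat_l; lra).
    assert (q 0 * w 0 * (x * y) <= q 0 * (4 * E0) * (x * y)).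
    { apply Rmult_le_compat_r. nra. apply Rmult_le_compat_l; lra. }
    assert (q 0 * (4 * E0) * (x * y) <= q 0 * (4 * E0) * (6 * M * T * exp (2 * M))).
    { apply Rmult_le_compat_l; [nra|lra]. }
    lra. }
  assert (Hb2 : q 0 * (4 * E0) * (6 * M * T * exp (2 * M)) = 12 * M * q 0 * exp (3 * M) * g 0).
  { replace (3 * M) with (M + 2 * M) by ring. rewrite exp_plus.
    replace (q 0 * (4 * E0) * (6 * M * T * exp (2 * M))) with (12 * M * q 0 * exp (2 * M) * (2 * E0 * T)) by ring.
    rewrite Hkey. ring. }
  lra.
Qed.

Definition Cst M rs := 12 * M * rs ^ 2 * exp (3 * M).
Definition Kst M rs := 1 + 4 / rs + 6 * rs * exp M + Cst M rs / rs.

Lemma nz_sq a b : (a, b) <> (0, 0) -> 0 < a ^ 2 + b ^ 2.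
Proof.
  intros H. destruct (Req_dec a 0) as [->|Ha].
  - destruct (Req_dec b 0) as [->|Hb]; [exfalso; apply H; reflexivity|]. 
    assert (0 < b ^ 2) by (simpl; rewrite Rmult_1_r; apply Rsqr_pos_lt; auto). simpl; nra.
  - assert (0 < a ^ 2) by (simpl; rewrite Rmult_1_r; apply Rsqr_pos_lt; auto). simpl in *. nra.
Qed.

Lemma one_traj (D : R -> R -> R) M
  (HDnn : forall y1 y2 : R, (y1, y2) <> (0, 0) -> 0 <= D y1 y2)
  (HDbd : forall y1 y2 : R, (y1, y2) <> (0, 0) -> Rabs (D y1 y2) <= M)
  (HM : 0 <= M) (x1 x2 v1 v2 rd : R -> R)
  (Hsol : is_solution D x1 x2 v1 v2)
  (Hrd : forall t, t <= 0 -> ldrv (fun s => nrm (x1 s) (x2 s)) t (rd t))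
  (rs : R) (Hrs : 0 < rs) (Hr0 : nrm (x1 0) (x2 0) = rs) :
  Kst M rs < rd 0 ->
  exists tf tau,
    tf < 0 /\ rd tf = 0 /\ (forall t, tf < t < 0 -> 0 < rd t) /\ (forall t, t < tf -> rd t < 0) /\
    tau < tf /\ nrm (x1 tau) (x2 tau) = rs /\
    - (2 * rs * exp M / rd 0) <= tf /\ - (6 * rs * exp M / rd 0) <= tau /\
    rd tau <= - (rd 0 - Cst M rs / rs).
Proof.
  intros HK.
  set (a1 := - D (x1 0) (x2 0) * v1 0 - x1 0 / (nrm (x1 0) (x2 0)) ^ 3).
  set (a2 := - D (x1 0) (x2 0) * v2 0 - x2 0 / (nrm (x1 0) (x2 0)) ^ 3).
  set (X1 := ext x1 (v1 0)). set (X2 := ext x2 (v2 0)).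
  set (V1 := ext v1 a1). set (V2 := ext v2 a2).
  set (Dt := fun t => D (X1 t) (X2 t)).
  assert (HTH : TH X1 X2 V1 V2 Dt M).
  { intros t Ht. destruct (Hsol t Ht) as (Hnz & H1 & H2 & H3 & H4).
    assert (E1 : X1 t = x1 t) by (apply ext_eq; auto).
    assert (E2 : X2 t = x2 t) by (apply ext_eq; auto).
    assert (E3 : V1 t = v1 t) by (apply ext_eq; auto).
    assert (E4 : V2 t = v2 t) by (apply ext_eq; auto).
    unfold Dt. rewrite E1, E2, E3, E4.
    split; [apply nz_sq; auto|].
    split. { apply is_derive_Reals. apply ext_dpl; auto. intros ->; reflexivity. }
    split. { apply is_derive_Reals. apply ext_dpl; auto. intros ->; reflexivity. }
    split. { apply is_derive_Reals. apply ext_dpl; auto. intros ->; reflexivity. }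
    split. { apply is_derive_Reals. apply ext_dpl; auto. intros ->; reflexivity. }
    split. apply HDnn; auto. specialize (HDbd _ _ Hnz). assert (Hab := Rle_abs (D (x1 t) (x2 t))). lra. }
  assert (Hnrm : forall t, t <= 0 -> nrm (x1 t) (x2 t) = sqrt (qf X1 X2 t)).
  { intros t Ht. unfold nrm, qf. unfold X1, X2. rewrite !ext_eq by auto. reflexivity. }
  assert (Hrdg : forall t, t <= 0 -> rd t = gf X1 X2 V1 V2 t / sqrt (qf X1 X2 t)).
  { intros t Ht. apply (eps_d_unique (fun s => nrm (x1 s) (x2 s)) t); auto.
    apply ldrv_eps; auto.
    apply (eps_d_ext (fun s => sqrt (qf X1 X2 s))); auto.
    intros s Hs; rewrite Hnrm; auto.
    apply dpl_eps. apply is_derive_Reals. eapply d_r; eauto. }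
  assert (Hq0 : sqrt (qf X1 X2 0) = rs) by (rewrite <- Hnrm by lra; auto).
  assert (Hqq : qf X1 X2 0 = rs ^ 2).
  { rewrite <- Hq0. simpl. rewrite Rmult_1_r, sqrt_sqrt; auto. left; apply (TH_q _ _ _ _ _ _ 0 HTH); lra. }
  set (V := rd 0) in *.
  assert (HV : gf X1 X2 V1 V2 0 = rs * V).
  { unfold V. rewrite Hrdg by lra. rewrite Hq0. field. lra. }
  assert (Hexp : 0 < exp M) by apply exp_pos.
  assert (HC0 : 0 <= Cst M rs).
  { unfold Cst. assert (0 < exp (3 * M)) by apply exp_pos. assert (0 < rs ^ 2) by (simpl; nra).
    assert (0 <= 12 * M * rs ^ 2) by nra. nra. }
  assert (HCr : 0 <= Cst M rs / rs) by (apply Rdiv_le_0_compat; lra).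
  assert (H4r : 0 < 4 / rs) by (apply Rdiv_lt_0_compat; lra).
  assert (H6 : 0 < 6 * rs * exp M) by nra.
  unfold Kst in HK.
  assert (HV1 : 1 < V) by lra.
  assert (HV2 : 4 / rs < V * V) by nra.
  assert (HV2' : 1 / rs < V * V / 4).
  { replace (1 / rs) with (4 / rs / 4) by (field; lra). lra. }
  assert (HV3 : 6 * rs * exp M < V) by lra.
  assert (HV4 : Cst M rs <= rs * V).
  { assert (Cst M rs / rs * rs <= V * rs) by (apply Rmult_le_compat_r; lra).
    replace (Cst M rs / rs * rs) with (Cst M rs) in H by (field; lra). lra. }
  assert (Hl0 := lagrange X1 X2 V1 V2 0).
  assert (Hw0 : V * V <= wf V1 V2 0).
  { rewrite Hqq, HV in Hl0. assert (0 <= cf X1 X2 V1 V2 0 ^ 2) by (simpl; nra).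
    assert (rs ^ 2 * (V * V) <= rs ^ 2 * wf V1 V2 0) by (simpl in *; nra).
    assert (0 < rs ^ 2) by (simpl; nra). nra. }
  assert (HE0 : V * V / 4 <= Ef X1 X2 V1 V2 0).
  { unfold Ef. rewrite Hq0. replace (1 / rs) with (4 / rs / 4) by (field; lra). lra. }
  destruct (traj X1 X2 V1 V2 Dt M HTH HM) as [tf [tau Hres]].
  { rewrite HV; nra. }
  { rewrite Hq0. lra. }
  { rewrite HV. assert (3 * (rs * V) * exp M <= V * V / 2).
    { assert (V * (6 * rs * exp M) <= V * V) by (apply Rmult_le_compat_l; lra). nra. } lra. }
  destruct Hres as (Htf & Hgtf & Hpos & Hneg & Htau & Hqtau & Hgtau).
  assert (Hsq : forall t, t <= 0 -> 0 < sqrt (qf X1 X2 t)).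
  { intros t Ht. apply sqrt_lt_R0. apply (TH_q _ _ _ _ _ _ t HTH Ht). }
  assert (HT : gf X1 X2 V1 V2 0 * exp M / (2 * Ef X1 X2 V1 V2 0) <= 2 * rs * exp M / V).
  { rewrite HV. unfold Rdiv. 
    assert (0 < V * V / 2) by nra.
    assert (/ (2 * Ef X1 X2 V1 V2 0) <= / (V * V / 2)) by (apply Rinv_le_contravar; lra).
    assert (0 <= rs * V * exp M) by nra.
    assert (rs * V * exp M * / (2 * Ef X1 X2 V1 V2 0) <= rs * V * exp M * / (V * V / 2)) by (apply Rmult_le_compat_l; lra).
    replace (2 * rs * exp M * / V) with (rs * V * exp M * / (V * V / 2)) by (field; lra). lra. }
  exists tf, tau.
  split; [lra|]. split.
  { rewrite Hrdg by lra. rewrite Hgtf. unfold Rdiv; ring. }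
  split.
  { intros t Ht. rewrite Hrdg by lra. apply Rdiv_lt_0_compat. apply Hpos; lra. apply Hsq; lra. }
  split.
  { intros t Ht. rewrite Hrdg by lra. assert (gf X1 X2 V1 V2 t < 0) by (apply Hneg; auto).
    assert (0 < sqrt (qf X1 X2 t)) by (apply Hsq; lra).
    unfold Rdiv. assert (0 < / sqrt (qf X1 X2 t)) by (apply Rinv_0_lt_compat; auto). nra. }
  split; [lra|]. split.
  { rewrite Hnrm by lra. rewrite Hqtau. auto. }
  split.
  { assert (0 <= 2 * rs * exp M / V) by (apply Rdiv_le_0_compat; nra). lra. }
  split.
  { replace (6 * rs * exp M / V) with (3 * (2 * rs * exp M / V)) by (field; lra). lra. }
  rewrite Hrdg by lra. rewrite Hqtau, Hq0.
  rewrite HV, Hqq in Hgtau.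
  assert (Hgn : gf X1 X2 V1 V2 tau < 0) by (apply Hneg; lra).
  fold (Cst M rs) in Hgtau.
  assert (Hc : 12 * M * rs ^ 2 * exp (3 * M) = Cst M rs) by reflexivity.
  idtac.
  assert (Hgt2 : gf X1 X2 V1 V2 tau <= - (rs * V - Cst M rs)).
  { set (u := gf X1 X2 V1 V2 tau) in *. set (C := Cst M rs) in *. simpl in Hgtau.
    assert ((rs * V - C) * (rs * V - C) <= u * u) by nra. nra. }
  replace (- (V - Cst M rs / rs)) with (- (rs * V - Cst M rs) / rs) by (field; lra).
  unfold Rdiv. apply Rmult_le_compat_r. left; apply Rinv_0_lt_compat; lra. exact Hgt2.
Qed.

Lemma div_small A eps V : 0 < A -> 0 < eps -> A / eps < V -> A / V < eps.
Proof.
  intros HA He HV. assert (0 < A / eps) by (apply Rdiv_lt_0_compat; auto).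
  assert (HV0 : 0 < V) by lra.
  apply (Rmult_lt_compat_r eps) in HV; auto. replace (A / eps * eps) with A in HV by (field; lra).
  apply (Rmult_lt_reg_r V); auto. replace (A / V * V) with A by (field; lra). lra.
Qed.

Theorem lemma7p2
  (D : R -> R -> R)
  (HDnn : forall y1 y2 : R, (y1, y2) <> (0, 0) -> 0 <= D y1 y2)
  (HDbd : exists M : R, forall y1 y2 : R, (y1, y2) <> (0, 0) -> Rabs (D y1 y2) <= M)
  (HDC1 : C1_punctured D)
  (x1 x2 v1 v2 rd : nat -> R -> R)
  (Hsol : forall n, is_solution D (x1 n) (x2 n) (v1 n) (v2 n))
  (Hnr : forall n, nonrectilinear (x1 n) (x2 n) (v1 n) (v2 n))
  (Hrd : forall n t, t <= 0 ->
     ldrv (fun s => nrm (x1 n s) (x2 n s)) t (rd n t))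
  (rstar : R) (Hrstar : 0 < rstar)
  (Hr0 : forall n, nrm (x1 n 0) (x2 n 0) = rstar)
  (Hrd0 : is_lim_seq (fun n => rd n 0) p_infty) :
  exists (N : nat) (tf tau : nat -> R),
    (forall n, (N <= n)%nat ->
       tf n < 0 /\ rd n (tf n) = 0 /\
       (forall t, tf n < t < 0 -> 0 < rd n t) /\
       (forall t, t < tf n -> rd n t < 0) /\
       tau n < tf n /\ nrm (x1 n (tau n)) (x2 n (tau n)) = rstar) /\
    is_lim_seq tf 0 /\
    is_lim_seq tau 0 /\
    is_lim_seq (fun n => rd n (tau n)) m_infty.
Proof.
  destruct HDbd as [M HMb].
  assert (HM : 0 <= M).
  { assert (Hn : (1, 0) <> (0, 0)) by (intros Heq; inversion Heq; lra).
    specialize (HMb 1 0 Hn). assert (0 <= Rabs (D 1 0)) by apply Rabs_pos. lra. }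
  set (K := Kst M rstar).
  set (P := fun n (p : R * R) =>
    K < rd n 0 ->
    fst p < 0 /\ rd n (fst p) = 0 /\ (forall t, fst p < t < 0 -> 0 < rd n t) /\
    (forall t, t < fst p -> rd n t < 0) /\
    snd p < fst p /\ nrm (x1 n (snd p)) (x2 n (snd p)) = rstar /\
    - (2 * rstar * exp M / rd n 0) <= fst p /\ - (6 * rstar * exp M / rd n 0) <= snd p /\
    rd n (snd p) <= - (rd n 0 - Cst M rstar / rstar)).
  assert (Hex : forall n, exists p, P n p).
  { intros n. destruct (classic (K < rd n 0)) as [Hk|Hk].
    - destruct (one_traj D M HDnn HMb HM (x1 n) (x2 n) (v1 n) (v2 n) (rd n) (Hsol n) (Hrd n) rstar Hrstar (Hr0 n) Hk)
        as [tf [tau Hp]].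
      exists (tf, tau). intros _. exact Hp.
    - exists (0, 0). intros Hc; contradiction. }
  set (pf := fun n => proj1_sig (constructive_indefinite_description _ (Hex n))).
  assert (Hpf : forall n, P n (pf n)) by (intros n; unfold pf; apply proj2_sig).
  apply is_lim_seq_spec in Hrd0. simpl in Hrd0.
  assert (Hexp : 0 < exp M) by apply exp_pos.
  destruct (Hrd0 K) as [N0 HN0].
  exists N0, (fun n => fst (pf n)), (fun n => snd (pf n)).
  split; [|split; [|split]].
  - intros n Hn. destruct (Hpf n (HN0 n Hn)) as (A1 & A2 & A3 & A4 & A5 & A6 & _). auto 10.
  - apply is_lim_seq_spec. intros eps.
    destruct (Hrd0 (Rmax K (6 * rstar * exp M / eps))) as [N HN].
    exists N. intros n Hn. specialize (HN n Hn).
    assert (HK : K < rd n 0) by (eapply Rle_lt_trans; [apply Rmax_l|exact HN]).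
    assert (HB : 6 * rstar * exp M / eps < rd n 0) by (eapply Rle_lt_trans; [apply Rmax_r|exact HN]).
    destruct (Hpf n HK) as (A1 & _ & _ & _ & _ & _ & A7 & A8 & _).
    assert (Hs := div_small (6 * rstar * exp M) eps (rd n 0) ltac:(nra) (cond_pos eps) HB).
    assert (HVp : 0 < rd n 0). { assert (0 < 6 * rstar * exp M / eps) by (apply Rdiv_lt_0_compat; [nra|apply cond_pos]). lra. }
    assert (2 * rstar * exp M / rd n 0 <= 6 * rstar * exp M / rd n 0).
    { unfold Rdiv. apply Rmult_le_compat_r. left; apply Rinv_0_lt_compat; auto. nra. }
    rewrite Rminus_0_r. rewrite Rabs_left by lra. lra.
  - apply is_lim_seq_spec. intros eps.
    destruct (Hrd0 (Rmax K (6 * rstar * exp M / eps))) as [N HN].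
    exists N. intros n Hn. specialize (HN n Hn).
    assert (HK : K < rd n 0) by (eapply Rle_lt_trans; [apply Rmax_l|exact HN]).
    assert (HB : 6 * rstar * exp M / eps < rd n 0) by (eapply Rle_lt_trans; [apply Rmax_r|exact HN]).
    destruct (Hpf n HK) as (A1 & _ & _ & _ & A5 & _ & A7 & A8 & _).
    assert (Hs := div_small (6 * rstar * exp M) eps (rd n 0) ltac:(nra) (cond_pos eps) HB).
    rewrite Rminus_0_r. rewrite Rabs_left by lra. lra.
  - apply is_lim_seq_spec. intros B. simpl.
    destruct (Hrd0 (Rmax K (Cst M rstar / rstar - B))) as [N HN].
    exists N. intros n Hn. specialize (HN n Hn).
    assert (HK : K < rd n 0) by (eapply Rle_lt_trans; [apply Rmax_l|exact HN]).
    assert (HB : Cst M rstar / rstar - B < rd n 0) by (eapply Rle_lt_trans; [apply Rmax_r|exact HN]).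
    destruct (Hpf n HK) as (_ & _ & _ & _ & _ & _ & _ & _ & A9).
    lra.
Qed.
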